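(* Let $G$ be a graph and $uv\in E(G)$. Let $W_1=N(u)\setminus N[v]$, $W_2=N(u)\cap N(v)$, $W_3=N(v)\setminus N[u]$ and $W_4=V(G)\setminus (N[u]\cup N[v])$. Suppose there is no maximal induced matching $M$ of $G$ with $V(M)\subseteq W_1\cup W_4$ and $V(M)\cap W_1\ne\emptyset$, and there is no maximal induced matching $M$ of $G$ with $V(M)\subseteq W_3\cup W_4$ and $V(M)\cap W_3\neq\emptyset$. Then $|M_{G_{u\to v}}|\ge |M_G|$ or $|M_{G_{v\to u}}|\ge |M_G|$.
   Context: Graphs are finite, simple, undirected. $N(x)$, $N[x]$ are the open and closed neighborhoods. An induced matching is a matching whose endpoints induce a $1$-regular subgraph; it is maximal if not properly contained in another induced matching; $M_G$ is the set of maximal induced matchings of $G$; $V(M)$ is the set of vertices covered by $M$. For $uv\in E(G)$, $G_{v\to u}$ is the graph obtained from $G$ by deleting the edge $vx$ for every $x\in N(v)\setminus N[u]$ and adding the edge $vy$ for every $y\in N(u)\setminus N[v]$ (so that $N[v]=N[u]$ afterwards); $G_{u\to v}$ is defined symmetrically. *)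

(* Defs.v *)
(* A simple graph is a symmetric irreflexive relation e on a finType T. *)
From mathcomp Require Import all_boot.
Set Implicit Arguments. Unset Strict Implicit. Unset Printing Implicit Defensive.

Section Graphs.
Variable T : finType.
Variable e : rel T.

Definition N (x : T) : {set T} := [set y | e x y].
Definition Nc (x : T) : {set T} := x |: N x.

Definition edgeb (f : {set T}) : bool :=
  [exists x, exists y, e x y && (f == [set x; y])].

Definition VM (M : {set {set T}}) : {set T} := \bigcup_(f in M) f.

Definition matchingb (M : {set {set T}}) : bool :=
  [forall f in M, edgeb f] &&
  [forall f in M, forall g in M, (f != g) ==> [disjoint f & g]].

Definition induced_matchingb (M : {set {set T}}) : bool :=
  matchingb M &&
  [forall x in VM M, #|[set y in VM M | e x y]| == 1].

Definition maximal_induced_matchingb (M : {set {set T}}) : bool :=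
  induced_matchingb M &&
  [forall M' : {set {set T}}, (M \proper M') ==> ~~ induced_matchingb M'].

Definition MIM : {set {set {set T}}} := [set M | maximal_induced_matchingb M].
End Graphs.

(* G_{a -> b}: delete a x for x in N(a) \ N[b], add a y for y in N(b) \ N[a],
   so that N[a] = N[b] afterwards. *)
Definition shift_adj (T : finType) (e : rel T) (a b : T) (y : T) : bool :=
  (e a y && ~~ ((y \in N e a) && (y \notin Nc e b))) ||
  ((y \in N e b) && (y \notin Nc e a)).

Definition shift (T : finType) (e : rel T) (a b : T) : rel T :=
  fun x y => if x == a then shift_adj e a b y
             else if y == a then shift_adj e a b x
             else e x y.

(* Main.v *)
Require Import Defs.
From mathcomp Require Import all_boot.
From mathcomp Require Import all_fingroup.
From mathcomp Require Import zify.

Module Helpers.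
Set Implicit Arguments. Unset Strict Implicit. Unset Printing Implicit Defensive.

Section Basic.
Variable T : finType.
Implicit Types (M : {set {set T}}) (f g : {set T}).

Lemma VMP x M : reflect (exists2 f, f \in M & x \in f) (x \in VM M).
Proof. exact: bigcupP. Qed.

Lemma VMS M1 M2 : M1 \subset M2 -> VM M1 \subset VM M2.
Proof.
move=> s; apply/subsetP=> x /VMP [f fM xf]; apply/VMP; exists f => //.
exact: (subsetP s).
Qed.

Lemma VMU1 f M x : (x \in VM (f |: M)) = (x \in f) || (x \in VM M).
Proof.
apply/VMP/orP => [[g /setU1P [->|gM] xg]|[xf|/VMP [g gM xg]]].
- by left.
- by right; apply/VMP; exists g.
- by exists f => //; exact: setU11.
- by exists g => //; apply/setU1P; right.
Qed.

Lemma set2C (a b : T) : [set a; b] = [set b; a].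
Proof. by apply/setP=> z; rewrite !inE orbC. Qed.

Variable e : rel T.
Hypothesis esym : symmetric e.
Hypothesis eirr : irreflexive e.

Definition closedb M :=
  [forall x in VM M, forall y in VM M, e x y ==> ([set x; y] \in M)].

Lemma closedP M : reflect (forall x y, x \in VM M -> y \in VM M -> e x y -> [set x; y] \in M)
  (closedb M).
Proof.
apply: (iffP forall_inP) => [h x y xV yV exy|h x xV].
- by move: (h x xV) => /forall_inP /(_ y yV) /implyP; apply.
- by apply/forall_inP => y yV; apply/implyP; apply: h.
Qed.

Lemma edgebP f : reflect (exists x y, e x y /\ f = [set x; y]) (edgeb e f).
Proof.
apply: (iffP existsP) => [[x /existsP [y /andP [exy /eqP ->]]]|[x [y [exy ->]]]].
- by exists x, y.
- by exists x; apply/existsP; exists y; rewrite exy eqxx.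
Qed.

Lemma matchingP M : reflect
  ((forall f, f \in M -> edgeb e f) /\
   (forall f g, f \in M -> g \in M -> f != g -> [disjoint f & g]))
  (matchingb e M).
Proof.
apply: (iffP andP) => [[/forall_inP h1 /forall_inP h2]|[h1 h2]]; split.
- exact h1.
- by move=> f g fM gM; move: (h2 f fM) => /forall_inP /(_ g gM) /implyP.
- by apply/forall_inP.
- by apply/forall_inP => f fM; apply/forall_inP => g gM; apply/implyP; apply: h2.
Qed.

Lemma match_eq M f g x : matchingb e M -> f \in M -> g \in M -> x \in f -> x \in g -> f = g.
Proof.
move=> /matchingP [_ h] fM gM xf xg; apply/eqP; apply/negPn/negP => /(h f g fM gM) d.
by rewrite (disjointFr d xf) in xg.
Qed.

Lemma partner M f x : matchingb e M -> f \in M -> x \in f ->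
  exists p, e x p /\ f = [set x; p].
Proof.
move=> /matchingP [h _] fM xf; move: (h f fM) => /edgebP [a [b [eab fE]]].
move: xf; rewrite fE => /set2P [->|->].
- by exists b.
- by exists a; rewrite esym set2C.
Qed.

Lemma IME M : induced_matchingb e M = matchingb e M && closedb M.
Proof.
rewrite /induced_matchingb; case: (boolP (matchingb e M)) => //= hm.
apply/forall_inP/closedP => [h x y xV yV exy|h x xV].
- move: (xV) => /VMP [f fM xf]; have [p [exp fE]] := partner hm fM xf.
  have pV : p \in VM M by apply/VMP; exists f => //; rewrite fE set22.
  move: (h x xV) => /cards1P [a aE].
  have : y \in [set y in VM M | e x y] by rewrite inE yV exy.
  have : p \in [set y in VM M | e x y] by rewrite inE pV exp.
  by rewrite aE !inE => /eqP pa /eqP ya; rewrite ya -pa -fE.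
- move: (xV) => /VMP [f fM xf]; have [p [exp fE]] := partner hm fM xf.
  have pV : p \in VM M by apply/VMP; exists f => //; rewrite fE set22.
  apply/cards1P; exists p; apply/setP => z; rewrite !inE; apply/andP/eqP.
  + move=> [zV exz]; have xzM := h x z xV zV exz.
    have E := match_eq hm xzM fM (set21 _ _) xf.
    have : z \in f by rewrite -E set22.
    rewrite fE => /set2P [zx|//]; by rewrite zx eirr in exz.
  + by move=> ->.
Qed.

Lemma IMP M : reflect [/\ forall f, f \in M -> edgeb e f,
   (forall f g, f \in M -> g \in M -> f != g -> [disjoint f & g]) &
   (forall x y, x \in VM M -> y \in VM M -> e x y -> [set x; y] \in M)]
  (induced_matchingb e M).
Proof.
rewrite IME; apply: (iffP andP) => [[/matchingP [h1 h2] /closedP h3]|[h1 h2 h3]].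
- by split.
- by split; [apply/matchingP|apply/closedP].
Qed.

Lemma IM_sub M1 M2 : M1 \subset M2 -> induced_matchingb e M2 -> induced_matchingb e M1.
Proof.
move=> s /IMP [h1 h2 h3]; apply/IMP; split.
- by move=> f fM; apply: h1; exact: (subsetP s).
- by move=> f g fM gM; apply: h2; exact: (subsetP s).
- move=> x y xV yV exy; have xyM := h3 x y (subsetP (VMS s) _ xV) (subsetP (VMS s) _ yV) exy.
  move: xV => /VMP [f fM xf].
  have -> // : [set x; y] = f.
  have hm : matchingb e M2 by apply/matchingP.
  exact: match_eq hm xyM (subsetP s f fM) (set21 _ _) xf.
Qed.

Lemma MIMP M : reflect (induced_matchingb e M /\
    forall f, f \notin M -> ~~ induced_matchingb e (f |: M))
  (M \in MIM e).
Proof.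
rewrite inE /maximal_induced_matchingb.
apply: (iffP andP) => [[hM /forallP h]|[hM h]]; split => //.
- move=> f fM; apply: (implyP (h (f |: M))); apply/properP; split.
  + exact: subsetUr.
  + by exists f => //; exact: setU11.
- apply/forallP => M'; apply/implyP => /properP [s [f fM' fM]]; apply/negP => hM'.
  move: (h f fM) => /negP; apply; apply: IM_sub hM'.
  by rewrite subUset sub1set fM' s.
Qed.

Lemma IM_ext M : induced_matchingb e M -> exists2 M' : {set {set T}}, M \subset M' & M' \in MIM e.
Proof.
move=> hM.
pose P := fun X : {set {set T}} => induced_matchingb e X && (M \subset X).
have PM : P M by rewrite /P hM subxx.
case: (@arg_maxnP _ M P (fun X : {set {set T}} => #|X|) PM) => X /andP [hX sX] mx.
exists X => //; apply/MIMP; split => // f fX; apply/negP => hf.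
have : P (f |: X) by rewrite /P hf (subset_trans sX) // subsetUr.
move=> /mx; rewrite cardsU1 fX => /=; by rewrite add1n ltnn.
Qed.

End Basic.

Lemma IM_local (T : finType) (e e' : rel T) (esym : symmetric e) (eirr : irreflexive e)
 (esym' : symmetric e') (eirr' : irreflexive e') (M : {set {set T}}) : (forall x y, x \in VM M -> y \in VM M -> e x y = e' x y) ->
  induced_matchingb e M -> induced_matchingb e' M.
Proof.
move=> h /(IMP esym eirr) [h1 h2 h3]; apply/(IMP esym' eirr'); split => //.
- move=> f fM; move: (h1 f fM) => /edgebP [x [y [exy fE]]].
  have xV : x \in VM M by apply/VMP; exists f => //; rewrite fE set21.
  have yV : y \in VM M by apply/VMP; exists f => //; rewrite fE set22.
  by apply/existsP; exists x; apply/existsP; exists y; rewrite -h // exy fE eqxx.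
- by move=> x y xV yV; rewrite -h //; apply: h3.
Qed.


Lemma disjP (T : finType) (A B : {set T}) :
  (forall x, x \in A -> x \in B -> False) -> [disjoint A & B].
Proof.
move=> h; rewrite -setI_eq0; apply/eqP/setP => x; rewrite !inE.
by apply/negbTE/andP => -[] /h H /H.
Qed.

Section Aut.
Variable T : finType.
Variable e : rel T.
Hypothesis esym : symmetric e.
Hypothesis eirr : irreflexive e.

Definition Phi (s : {perm T}) (M : {set {set T}}) : {set {set T}} :=
  [set [set s x | x in f] | f : {set T} in M].

Lemma imset_perm2 (s : {perm T}) x y : [set s z | z in [set x; y]] = [set s x; s y].
Proof. by rewrite imsetU1 imset_set1. Qed.

Lemma PhiK (s : {perm T}) (M : {set {set T}}) : Phi (s^-1)%g (Phi s M) = M.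
Proof.
rewrite /Phi -imset_comp -[RHS]imset_id; apply: eq_imset => f /=.
rewrite -imset_comp -[RHS]imset_id; apply: eq_imset => x /=; exact: permK.
Qed.

Lemma mem_Phi (s : {perm T}) M (f : {set T}) : ([set s x | x in f] \in Phi s M) = (f \in M).
Proof. apply: mem_imset; apply: imset_inj; exact: perm_inj. Qed.

Lemma VM_Phi (s : {perm T}) (M : {set {set T}}) x : (s x \in VM (Phi s M)) = (x \in VM M).
Proof.
apply/VMP/VMP => [[g /imsetP [f fM ->]]|[f fM xf]].
- by rewrite (mem_imset _ _ (@perm_inj _ s)) => xf; exists f.
- by exists [set s x | x in f]; [rewrite mem_Phi|apply: imset_f].
Qed.

Lemma IM_Phi (s : {perm T}) (M : {set {set T}}) : (forall x y, e (s x) (s y) = e x y) ->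
  induced_matchingb e M -> induced_matchingb e (Phi s M).
Proof.
move=> hs /(IMP esym eirr) [h1 h2 h3]; apply/(IMP esym eirr); split.
- move=> g /imsetP [f fM ->]; move: (h1 f fM) => /(edgebP e) [x [y [exy ->]]].
  by apply/(edgebP e); exists (s x), (s y); rewrite hs imset_perm2.
- move=> g1 g2 /imsetP [f1 f1M ->] /imsetP [f2 f2M ->] ne.
  have : f1 != f2 by apply: contraNneq ne => ->.
  move=> /(h2 _ _ f1M f2M) d; apply: disjP => z /imsetP [z1 z1f ->].
  rewrite (mem_imset _ _ (@perm_inj _ s)) => z1f2.
  by rewrite (disjointFr d z1f) in z1f2.
- move=> x y; rewrite -{1}(permKV s x) -{1}(permKV s y) !VM_Phi => xV yV.
  rewrite -{1}(permKV s x) -{1}(permKV s y) hs => exy.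
  rewrite -(permKV s x) -(permKV s y) -imset_perm2 mem_Phi; exact: h3.
Qed.

Lemma MIM_Phi (s : {perm T}) (M : {set {set T}}) : (forall x y, e (s x) (s y) = e x y) ->
  M \in MIM e -> Phi s M \in MIM e.
Proof.
move=> hs /(MIMP esym eirr) [hM hmax]; apply/(MIMP esym eirr); split.
  exact: IM_Phi.
move=> f fP; apply/negP => hf.
have hs' : forall x y, e ((s^-1)%g x) ((s^-1)%g y) = e x y.
  by move=> x y; rewrite -{2}(permKV s x) -{2}(permKV s y) hs.
have := IM_Phi hs' hf.
rewrite {1}/Phi imsetU1 -/(Phi (s^-1)%g (Phi s M)) PhiK.
apply/negP; apply: hmax; apply: contra fP => fM.
have -> : f = [set s x | x in [set (s^-1)%g x | x in f]].
  rewrite -imset_comp -[LHS]imset_id; apply: eq_imset => x /=; by rewrite permKV.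
by rewrite mem_Phi.
Qed.
End Aut.

Lemma add_edge (T : finType) (e : rel T) (esym : symmetric e) (eirr : irreflexive e)
  (M : {set {set T}}) x y :
  induced_matchingb e M -> e x y -> x \notin VM M -> y \notin VM M ->
  (forall s, s \in VM M -> ~~ e x s && ~~ e y s) ->
  induced_matchingb e ([set x; y] |: M).
Proof.
move=> /(IMP esym eirr) [h1 h2 h3] exy xV yV hs; apply/(IMP esym eirr); split.
- move=> f /setU1P [->|fM]; last exact: h1.
  by apply/(edgebP e); exists x, y.
- have dj : forall g, g \in M -> [disjoint [set x; y] & g].
    move=> g gM; apply: disjP => z /set2P [->|->] zg.
    + by move: xV => /VMP; apply; exists g.
    + by move: yV => /VMP; apply; exists g.
  move=> f g /setU1P [->|fM] /setU1P [->|gM] ne.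
  + by rewrite eqxx in ne.
  + exact: dj.
  + by rewrite disjoint_sym; apply: dj.
  + exact: h2.
- move=> p q; rewrite !VMU1 => /orP [/set2P [->|->]|pV] /orP [/set2P [->|->]|qV] epq.
  all: try by rewrite eirr in epq.
  all: try by apply/setU1P; left.
  all: try by apply/setU1P; left; rewrite set2C.
  all: try by move: (hs _ qV); rewrite epq ?andbF.
  all: try by rewrite esym in epq; move: (hs _ pV); rewrite epq ?andbF.
  by apply/setU1P; right; apply: h3.
Qed.

Lemma card4 (I : finType) (X : {set I}) (p q : pred I) :
  #|X| = #|[set x in X | p x && q x]| + #|[set x in X | ~~ p x && ~~ q x]| +
         #|[set x in X | p x && ~~ q x]| + #|[set x in X | q x && ~~ p x]|.
Proof.
rewrite -(cardsID [set x | p x] X) -(cardsID [set x | q x] (X :&: _)).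
rewrite -(cardsID [set x | q x] (X :\: _)).
have E1 : X :&: [set x | p x] :&: [set x | q x] = [set x in X | p x && q x].
  by apply/setP => x; rewrite !inE andbA.
have E2 : (X :&: [set x | p x]) :\: [set x | q x] = [set x in X | p x && ~~ q x].
  by apply/setP => x; rewrite !inE; case: (x \in X); case: (p x); case: (q x).
have E3 : (X :\: [set x | p x]) :&: [set x | q x] = [set x in X | q x && ~~ p x].
  by apply/setP => x; rewrite !inE; case: (x \in X); case: (p x); case: (q x).
have E4 : (X :\: [set x | p x]) :\: [set x | q x] = [set x in X | ~~ p x && ~~ q x].
  by apply/setP => x; rewrite !inE; case: (x \in X); case: (p x); case: (q x).
rewrite E1 E2 E3 E4.
by rewrite -!addnA; congr (_ + _); rewrite addnA addnC.
Qed.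

Section Shift.
Variable T : finType.
Variable e : rel T.
Hypothesis esym : symmetric e.
Hypothesis eirr : irreflexive e.
Variables a b : T.
Hypothesis eab : e a b.

Local Notation sh := (shift e a b).

Lemma ba : b != a.
Proof. by apply: contraTneq eab => ->; rewrite eirr. Qed.

Lemma sh_oth x y : x != a -> y != a -> sh x y = e x y.
Proof. by move=> hx hy; rewrite /shift (negbTE hx) (negbTE hy). Qed.

Lemma shadjE y : shift_adj e a b y = (y != a) && ((y == b) || e b y).
Proof.
rewrite /shift_adj !inE.
case: (eqVneq y a) => [->|ya]; first by rewrite eirr (esym b a) eab /= ?eqxx ?andbF.
case: (eqVneq y b) => [->|yb]; first by rewrite eab.
by case: (e a y); case: (e b y).
Qed.

Lemma sh_a y : sh a y = (y != a) && ((y == b) || e b y).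
Proof. by rewrite /shift eqxx shadjE. Qed.

Lemma sh_sym : symmetric sh.
Proof.
move=> x y; rewrite /shift.
case xa: (x == a); case ya: (y == a) => //=.
- by rewrite (eqP xa) (eqP ya).
Qed.

Lemma sh_irr : irreflexive sh.
Proof.
move=> x; case: (eqVneq x a) => [->|xa]; first by rewrite sh_a eqxx.
by rewrite sh_oth.
Qed.

Lemma sh_ab : sh a b.
Proof. by rewrite sh_a ba eqxx. Qed.

Lemma sh_twin y : y != a -> y != b -> sh a y = sh b y.
Proof. by move=> ya yb; rewrite sh_a sh_oth ?ba // ya (negbTE yb). Qed.

Lemma sh_twin' y : a != y -> b != y -> sh a y = sh b y.
Proof. by move=> ya yb; apply: sh_twin; rewrite eq_sym. Qed.

Lemma sh_aut x y : sh (tperm a b x) (tperm a b y) = sh x y.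
Proof.
case: tpermP => [->|->|xa xb]; case: tpermP => [->|->|ya yb].
all: rewrite ?sh_irr //.
all: try by rewrite sh_sym.
all: try by rewrite sh_twin //; apply/eqP.
all: try by rewrite -sh_twin //; apply/eqP.
all: try by rewrite sh_sym sh_twin 1?sh_sym //; apply/eqP.
all: try by rewrite sh_sym -sh_twin 1?sh_sym //; apply/eqP.
Qed.


Lemma agree_all (S : {set T}) : (forall y, y \in S -> e a y = sh a y) ->
  forall x y, x \in S -> y \in S -> e x y = sh x y.
Proof.
move=> h x y xS yS; case: (eqVneq x a) => [->|xa]; first exact: h.
case: (eqVneq y a) => [->|ya]; first by rewrite esym sh_sym h.
by rewrite sh_oth.
Qed.

Hypothesis hyp : ~ (exists M, M \in MIM e /\ VM M \subset (N e a :\: Nc e b) :|: ~: (Nc e a :|: Nc e b)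
   /\ VM M :&: (N e a :\: Nc e b) != set0).

Lemma back M f : M \in MIM e -> a \notin VM M -> f \notin M -> a \notin f ->
  induced_matchingb sh (f |: M) -> False.
Proof.
move=> /(MIMP esym eirr) [hM hmax] aM fM af hf.
move: (hmax f fM) => /negP; apply; move: hf; apply: (IM_local sh_sym sh_irr esym eirr).
move=> x y; rewrite !VMU1 => hx hy; apply: sh_oth.
- by apply: contraTneq hx => ->; rewrite negb_or af aM.
- by apply: contraTneq hy => ->; rewrite negb_or af aM.
Qed.

Lemma B_in M : M \in MIM e -> a \notin VM M -> b \notin VM M -> M \in MIM sh.
Proof.
move=> hMIM aM bM; move: (hMIM) => /(MIMP esym eirr) [hM hmax].
have agree : forall x y, x \in VM M -> y \in VM M -> e x y = sh x y.
  move=> x y xV yV; rewrite sh_oth //.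
  - by apply: contraTneq xV => ->.
  - by apply: contraTneq yV => ->.
apply/(MIMP sh_sym sh_irr); split.
  exact: (IM_local esym eirr sh_sym sh_irr agree hM).
move=> f fM; apply/negP => hf.
case: (boolP (a \in f)) => af; last exact: (back hMIM aM fM af hf).
move: (hf) => /(IMP sh_sym sh_irr) [h1 h2 h3].
have hm : matchingb sh (f |: M) by apply/matchingP.
have nb : forall s, s \in VM M -> ~~ e b s.
  move=> s sV; apply/negP => ebs.
  have sa : s != a by apply: contraTneq sV => ->.
  have sh_as : sh a s by rewrite sh_a sa ebs orbT.
  have := h3 a s; rewrite !VMU1 af sV orbT => /(_ isT isT sh_as) /setU1P [fE|asM].
  + move: (sV) => /VMP [g gM sg].
    have sf : s \in f by rewrite -fE set22.
    have fg := match_eq hm (setU11 f M) (setU1r f gM) sf sg.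
    by move: fM; rewrite fg gM.
  + by move: aM => /VMP; apply; exists [set a; s] => //; rewrite set21.
have za : forall z, z \in VM M -> (z == a) = false.
  by move=> z zV; apply/negbTE; apply: contraTneq zV => ->.
have zb : forall z, z \in VM M -> (z == b) = false.
  by move=> z zV; apply/negbTE; apply: contraTneq zV => ->.
have na : forall s, s \in VM M -> ~~ e a s.
  move=> s sV; apply/negP => eas.
  apply: hyp; exists M; split => //; split.
  - apply/subsetP => z zV; rewrite !inE (za z zV) (zb z zV) (negbTE (nb z zV)) /=.
    by case: (e a z).
  - by apply/set0Pn; exists s; rewrite !inE sV eas (zb s sV) (negbTE (nb s sV)).
have abM : [set a; b] \notin M.
  by apply: contra aM => abM; apply/VMP; exists [set a; b] => //; exact: set21.
apply: (negP (hmax _ abM)); apply: (add_edge esym eirr hM eab aM bM).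
by move=> s sV; rewrite na ?nb.
Qed.

Lemma V_in M : M \in MIM e -> b \in VM M -> a \notin VM M -> M \in MIM sh.
Proof.
move=> hMIM bM aM; move: (hMIM) => /(MIMP esym eirr) [hM hmax].
have agree : forall x y, x \in VM M -> y \in VM M -> e x y = sh x y.
  move=> x y xV yV; rewrite sh_oth //.
  - by apply: contraTneq xV => ->.
  - by apply: contraTneq yV => ->.
apply/(MIMP sh_sym sh_irr); split.
  exact: (IM_local esym eirr sh_sym sh_irr agree hM).
move=> f fM; apply/negP => hf.
case: (boolP (a \in f)) => af; last exact: (back hMIM aM fM af hf).
move: (hf) => /(IMP sh_sym sh_irr) [h1 h2 h3].
have hm : matchingb sh (f |: M) by apply/matchingP.
have := h3 a b; rewrite !VMU1 af bM orbT => /(_ isT isT sh_ab) /setU1P [fE|abM].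
- move: (bM) => /VMP [g gM bg].
  have bf : b \in f by rewrite -fE set22.
  have fg := match_eq hm (setU11 f M) (setU1r f gM) bf bg.
  by move: fM; rewrite fg gM.
- by move: aM => /VMP; apply; exists [set a; b] => //; rewrite set21.
Qed.

Lemma A_part M : M \in MIM e -> a \in VM M -> b \in VM M ->
  exists2 X, (X \in MIM sh) && (a \in VM X) && (b \in VM X) &
     M = [set g in X | [disjoint g & N e a :\: Nc e b]].
Proof.
move=> hMIM aM bM; move: (hMIM) => /(MIMP esym eirr) [hM hmax].
move: (hM) => /(IMP esym eirr) [h1 h2 h3].
have hm : matchingb e M by apply/matchingP.
have abM : [set a; b] \in M := h3 a b aM bM eab.
have Na : forall s, s \in VM M -> e a s -> s = b.
  move=> s sV eas; have asM := h3 a s aM sV eas.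
  have E := match_eq hm asM abM (set21 a s) (set21 a b).
  have : s \in [set a; b] by rewrite -E set22.
  by case/set2P => // sa; rewrite sa eirr in eas.
have Nb : forall s, s \in VM M -> e b s -> s = a.
  move=> s sV ebs; have bsM := h3 b s bM sV ebs.
  have E := match_eq hm bsM abM (set21 b s) (set22 a b).
  have : s \in [set a; b] by rewrite -E set22.
  by case/set2P => // sb; rewrite sb eirr in ebs.
have agree : forall y, y \in VM M -> e a y = sh a y.
  move=> y yV; rewrite sh_a; case: (eqVneq y a) => [->|ya]; first by rewrite eirr.
  case: (eqVneq y b) => [->|yb]; first by rewrite eab.
  case E1: (e a y); first by move: (Na y yV E1) yb => ->; rewrite eqxx.
  case E2: (e b y) => //.
  by move: (Nb y yV E2) ya => ->; rewrite eqxx.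
have hMsh : induced_matchingb sh M :=
  IM_local esym eirr sh_sym sh_irr (agree_all agree) hM.
have [X sX hX] := IM_ext sh_sym sh_irr hMsh.
have aX : a \in VM X := subsetP (VMS sX) _ aM.
have bX : b \in VM X := subsetP (VMS sX) _ bM.
exists X; first by rewrite hX aX bX.
move: (hX) => /(MIMP sh_sym sh_irr) [hXi _]; move: (hXi) => /(IMP sh_sym sh_irr) [k1 k2 k3].
have hmX : matchingb sh X by apply/matchingP.
have abX : [set a; b] \in X := subsetP sX _ abM.
apply/setP => g; rewrite inE.
case: (boolP (g \in M)) => gM.
- rewrite (subsetP sX _ gM) /=; symmetry.
  apply: disjP => s sg; rewrite !inE => /andP [nsb eas].
  have sV : s \in VM M by apply/VMP; exists g.
  by rewrite (Na s sV eas) eqxx in nsb.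
case: (boolP (g \in X)) => gX //=; symmetry; apply/negP => dg.
have ag : a \notin g.
  apply/negP => ag; have gE := match_eq hmX gX abX ag (set21 a b).
  by move: gM; rewrite gE abM.
have bg : b \notin g.
  apply/negP => bg; have gE := match_eq hmX gX abX bg (set22 a b).
  by move: gM; rewrite gE abM.
have hsub : induced_matchingb sh (g |: M).
  by apply: (IM_sub sh_sym sh_irr _ hXi); rewrite subUset sub1set gX sX.
apply: (negP (hmax g gM)); apply: (IM_local sh_sym sh_irr esym eirr _ hsub).
move=> x y xV yV; symmetry; apply: (agree_all _ xV yV) => z.
rewrite VMU1 => /orP [zg|zV]; last exact: agree.
have za : z != a by apply: contraNneq ag => <-.
have zb : z != b by apply: contraNneq bg => <-.
have zX : z \in VM X by apply/VMP; exists g.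
have inab : forall h, h \in X -> z \in h -> [set a; b] \in X -> (a \in h) || (b \in h) -> False.
  move=> h hX' zh _ /orP [ah|bh].
  - have E := match_eq hmX hX' abX ah (set21 a b).
    by move: zh; rewrite E => /set2P [/eqP|/eqP]; rewrite ?(negbTE za) ?(negbTE zb).
  - have E := match_eq hmX hX' abX bh (set22 a b).
    by move: zh; rewrite E => /set2P [/eqP|/eqP]; rewrite ?(negbTE za) ?(negbTE zb).
have shf : sh a z = false.
  apply/negP => shaz; have azX := k3 a z aX zX shaz.
  by apply: (inab _ azX (set22 a z) abX); rewrite set21.
have ef : e a z = false.
  apply/negP => eaz; have := disjointFr dg zg; rewrite !inE eaz andbT (negbTE zb) /= => /negbFE.
  move=> ebz; have shbz : sh b z by rewrite sh_oth ?ba.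
  have bzX := k3 b z bX zX shbz.
  by apply: (inab _ bzX (set22 b z) abX); rewrite set21 orbT.
by rewrite shf ef.
Qed.


Lemma count_sh :
  #|[set M in MIM e | (a \in VM M) && (b \in VM M)]| +
  #|[set M in MIM e | (a \notin VM M) && (b \notin VM M)]| +
  2 * #|[set M in MIM e | (b \in VM M) && (a \notin VM M)]| <= #|MIM sh|.
Proof.
rewrite (card4 (MIM sh) (fun M => a \in VM M) (fun M => b \in VM M)).
set A := [set M in MIM e | _ && _].
set B := [set M in MIM e | _ && _].
set V := [set M in MIM e | _ && _].
set A' := [set x in MIM sh | _ && _].
set B' := [set x in MIM sh | _ && _].
set U' := [set x in MIM sh | _ && _].
set V' := [set x in MIM sh | _ && _].
have h1 : #|A| <= #|A'|.
  pose r := fun X : {set {set T}} => [set g in X | [disjoint g & N e a :\: Nc e b]].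
  apply: (leq_trans _ (leq_imset_card r A')); apply: subset_leq_card.
  apply/subsetP => M; rewrite inE => /andP [hM /andP [aM bM]].
  have [X hX ->] := A_part hM aM bM.
  by apply: imset_f; rewrite inE andbA.
have h2 : #|B| <= #|B'|.
  apply: subset_leq_card; apply/subsetP => M; rewrite inE => /andP [hM /andP [aM bM]].
  by rewrite inE aM bM B_in.
have h3 : #|V| <= #|V'|.
  apply: subset_leq_card; apply/subsetP => M; rewrite inE => /andP [hM /andP [bM aM]].
  by rewrite inE aM bM V_in.
have h4 : #|V| <= #|U'|.
  rewrite -(card_imset _ (can_inj (@PhiK _ (tperm a b)))).
  apply: subset_leq_card; apply/subsetP => X /imsetP [M].
  rewrite inE => /andP [hM /andP [bM aM]] ->; rewrite inE.
  rewrite (MIM_Phi sh_sym sh_irr sh_aut (V_in hM bM aM)).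
  have := VM_Phi (tperm a b) M b; rewrite tpermR => ->.
  by have := VM_Phi (tperm a b) M a; rewrite tpermL => ->; rewrite bM aM.
rewrite -/A' -/B' -/U' -/V'.
rewrite mul2n -addnn.
rewrite !addnA; apply: leq_add; first apply: leq_add; first apply: leq_add.
all: done.

Qed.
End Shift.

End Helpers.
Import Helpers.

Lemma arith (m x1 x2 a b c d : nat) : a + b + 2 * d <= x1 -> a + b + 2 * c <= x2 ->
  m = a + b + c + d -> x1 < m -> m <= x2.
Proof. lia. Qed.

Theorem lemma2p1 (T : finType) (e : rel T) (esym : symmetric e)
  (eirr : irreflexive e) (u v : T) (huv : e u v) :
  let W1 := N e u :\: Nc e v in
  let W3 := N e v :\: Nc e u in
  let W4 := ~: (Nc e u :|: Nc e v) in
  ~ (exists M, M \in MIM e /\ VM M \subset W1 :|: W4 /\ VM M :&: W1 != set0) ->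
  ~ (exists M, M \in MIM e /\ VM M \subset W3 :|: W4 /\ VM M :&: W3 != set0) ->
  #|MIM e| <= #|MIM (shift e u v)| \/ #|MIM e| <= #|MIM (shift e v u)|.
Proof.
move=> W1 W3 W4 h1 h2.
have c1 := count_sh esym eirr huv h1.
have evu : e v u by rewrite esym.
have h2' : ~ (exists M, M \in MIM e /\ VM M \subset (N e v :\: Nc e u) :|: ~: (Nc e v :|: Nc e u)
   /\ VM M :&: (N e v :\: Nc e u) != set0).
  by rewrite [Nc e v :|: _]setUC; exact: h2.
have c2 := count_sh esym eirr evu h2'.
have part := card4 (MIM e) (fun M => u \in VM M) (fun M => v \in VM M).
have EA : [set M in MIM e | (v \in VM M) && (u \in VM M)] = [set M in MIM e | (u \in VM M) && (v \in VM M)].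
  by apply/setP => M; rewrite !inE (andbC (v \in VM M)).
have EB : [set M in MIM e | (v \notin VM M) && (u \notin VM M)] = [set M in MIM e | (u \notin VM M) && (v \notin VM M)].
  by apply/setP => M; rewrite !inE (andbC (v \notin VM M)).
rewrite EA EB in c2.
simpl in part.
case: (leqP #|MIM e| #|MIM (shift e u v)|) => h; [by left|right].
exact: (@arith _ _ _ _ _ _ _ c1 c2 part h).
Qed.
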